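(* Let $\langle A,f,g\rangle$ be a PS-algebra satisfying (ABT0) $x\leq f(x,x)$, (ABT2) $y\cdot f(x,z)\leq f(x\cdot f(x,y),z)$ and (ABT3) $f(x,g(x,-y)\cdot y)\leq y$ for all $x,y,z\in A$. Then the map $d\colon A\to A$, $d(a)=f(a,a)+-g(a,a)$, is the unary discriminator on $A$ (i.e. $d(0)=0$ and $d(a)=1$ for $a\neq0$) if and only if $\langle A,f,g\rangle$ satisfies (ABTW): for all $a\in A$, $a\neq0\Rightarrow g(a,a)\leq a$.
   Context: A PS-algebra is $\langle A,f,g\rangle$ where $A$ is a Boolean algebra with at least two elements (operations $+,\cdot,-,0,1$) and $f,g\colon A^2\to A$ satisfy: $f(x,y)=0$ whenever $x=0$ or $y=0$; $f$ is additive in each argument; $g(x,y)=1$ whenever $x=0$ or $y=0$; $g$ is co-additive in each argument ($g(x+x',y)=g(x,y)\cdot g(x',y)$, $g(x,y+y')=g(x,y)\cdot g(x,y')$). *)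

(* Defs.v *)
From mathcomp Require Import all_boot all_order.
Set Implicit Arguments. Unset Strict Implicit. Unset Printing Implicit Defensive.
Import Order.TTheory.
Local Open Scope order_scope.

(* Boolean algebras are MathComp's ctbDistrLatticeType:
   + = join `|`, . = meet `&`, - = complement ~`, 0 = \bot, 1 = \top. *)

Definition PS_algebra (d : Order.disp_t) (A : ctbDistrLatticeType d)
  (f g : A -> A -> A) : Prop :=
  (\bot : A) != \top /\
      (forall x y : A, x = \bot \/ y = \bot -> f x y = \bot) /\
      (forall x x' y : A, f (x `|` x') y = f x y `|` f x' y) /\
      (forall x y y' : A, f x (y `|` y') = f x y `|` f x y') /\
      (forall x y : A, x = \bot \/ y = \bot -> g x y = \top) /\
      (forall x x' y : A, g (x `|` x') y = g x y `&` g x' y) /\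
      (forall x y y' : A, g x (y `|` y') = g x y `&` g x y').

Definition dmap (d : Order.disp_t) (A : ctbDistrLatticeType d)
  (f g : A -> A -> A) (a : A) : A := f a a `|` ~` (g a a).

Definition unary_discriminator (d : Order.disp_t) (A : ctbDistrLatticeType d)
  (t : A -> A) : Prop :=
  t \bot = \bot /\ forall a : A, a != \bot -> t a = \top.

(* Main.v *)
Require Import Defs.
From mathcomp Require Import all_boot all_order.
Import Order.TTheory Order.Theory.
Local Open Scope order_scope.

Theorem theorem36 (disp : Order.disp_t) (A : ctbDistrLatticeType disp)
  (f g : A -> A -> A) :
  PS_algebra f g ->
  (forall x : A, x <= f x x) ->
  (forall x y z : A, y `&` f x z <= f (x `&` f x y) z) ->
  (forall x y : A, f x (g x (~` y) `&` y) <= y) ->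
  (unary_discriminator (dmap f g) <->
   (forall a : A, a != \bot -> g a a <= a)).
Proof.
move=> [_ [f0 [_ [_ [g0 _]]]]] T0 T2 T3; split.
- move=> [_ Hd] a a0.
  have Hb : g a a <= f a a.
    apply: (@leI2l_le _ _ (~` g a a) \top).
      by rewrite joinC; have := Hd a a0; rewrite /dmap.
    by rewrite meetxC le0x.
  set c := g a a `&` ~` a.
  have Hfc : f a c <= ~` a by have := T3 a (~` a); rewrite complK.
  have Hz : a `&` f a c = \bot.
    by apply/eqP; rewrite -lex0; apply: le_trans (leI2 (lexx a) Hfc) _; rewrite meetxC.
  have Hc0 : c `&` f a a = \bot.
    by apply/eqP; rewrite -lex0; apply: le_trans (T2 a c a) _; rewrite Hz f0 //; left.
  have Hcc : c = \bot.
    have : c <= f a a by apply: le_trans Hb; exact: leIl.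
    by rewrite leEmeet Hc0 eq_sym => /eqP.
  apply: (@leI2l_le _ _ (~` a) \top); first by rewrite joinCx.
  by rewrite -/c Hcc le0x.
- move=> H; split.
    by rewrite /dmap f0 ?g0 ?compl1 ?joinx0 //; left.
  move=> a a0; rewrite /dmap; apply/eqP; rewrite eq_le lex1 /=.
  rewrite -(joinxC a); apply: leU2; first exact: T0.
  by rewrite leC; apply: H.
Qed.
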